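(* Under the distributed-delay standing assumptions, let $\{x_i\}_{i=1}^N$ be a solution of the distributed-delay Hegselmann–Krause system. Then for every $v\in\mathbb{R}^d$, every $T\ge 0$, every $i=1,\dots,N$ and every $t\ge T-\bar\tau$, $$\min_{j=1,\dots,N}\min_{s\in[T-\bar\tau,T]}\langle x_j(s),v\rangle\le\langle x_i(t),v\rangle\le\max_{j=1,\dots,N}\max_{s\in[T-\bar\tau,T]}\langle x_j(s),v\rangle.$$
   Context: Distributed-delay standing assumptions: $N\ge2$, $d\ge1$, $\bar\tau>0$; $\tau_1,\tau_2:[0,\infty)\to[0,\infty)$ continuous with $0\le\tau_1(t)<\tau_2(t)\le\bar\tau$ for all $t\ge0$; $\alpha:[0,\bar\tau]\to(0,\infty)$ continuous; $h(t):=\int_{\tau_1(t)}^{\tau_2(t)}\alpha(s)\,ds>0$; $\psi:\mathbb{R}^d\times\mathbb{R}^d\to\mathbb{R}$ continuous, bounded and strictly positive, $K:=\|\psi\|_\infty$; initial data $x_i^0:[-\bar\tau,0]\to\mathbb{R}^d$ continuous. The distributed-delay system is $$\frac{d}{dt}x_i(t)=\frac{1}{h(t)}\frac{1}{N-1}\sum_{j\ne i}\int_{t-\tau_2(t)}^{t-\tau_1(t)}\alpha(t-s)\,\psi(x_i(t),x_j(s))\,(x_j(s)-x_i(t))\,ds,\quad t>0,$$ with $x_i=x_i^0$ on $[-\bar\tau,0]$; a solution means continuous $x_i:[-\bar\tau,\infty)\to\mathbb{R}^d$, differentiable on $(0,\infty)$, satisfying the system there. $\langle\cdot,\cdot\rangle$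 is the Euclidean inner product. *)

(* Defs.v *)
From HB Require Import structures.
From mathcomp Require Import all_boot all_order all_algebra.
From mathcomp Require Import all_classical all_reals all_analysis.
Set Implicit Arguments. Unset Strict Implicit. Unset Printing Implicit Defensive.
Import Order.TTheory GRing.Theory Num.Theory.
Import numFieldNormedType.Exports.
Local Open Scope classical_set_scope.
Local Open Scope ring_scope.

Definition dotv (R : realType) (d : nat) (a b : 'rV[R]_d) : R :=
  \sum_(k < d) a 0 k * b 0 k.

Definition hdel (R : realType) (tau1 tau2 alpha : R -> R) (t : R) : R :=
  Rintegral lebesgue_measure `[tau1 t, tau2 t] alpha.

Definition vintegral (R : realType) (d : nat) (a b : R) (f : R -> 'rV[R]_d)
  : 'rV[R]_d :=
  \row_(k < d) Rintegral lebesgue_measure `[a, b] (fun s => f s 0 k).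

Definition hk_rhs (R : realType) (N d : nat) (tau1 tau2 alpha : R -> R)
  (psi : 'rV[R]_d -> 'rV[R]_d -> R) (x : 'I_N -> R -> 'rV[R]_d)
  (i : 'I_N) (t : R) : 'rV[R]_d :=
  ((hdel tau1 tau2 alpha t)^-1 * (N%:R - 1)^-1) *:
    \sum_(j < N | j != i)
      vintegral (t - tau2 t) (t - tau1 t)
        (fun s => (alpha (t - s) * psi (x i t) (x j s)) *: (x j s - x i t)).

(* Main.v *)
Require Import Defs.
From HB Require Import structures.
From mathcomp Require Import all_boot all_order all_algebra.
From mathcomp Require Import all_classical all_reals all_analysis.
From mathcomp Require Import ring lra.
Import Order.TTheory GRing.Theory Num.Theory.
Import numFieldNormedType.Exports.
Local Open Scope classical_set_scope.
Local Open Scope ring_scope.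

Section dot.
Context (R : realType) (d : nat).
Implicit Types (u w v : 'rV[R]_d).

Lemma dotvZ c u v : dotv (c *: u) v = c * dotv u v.
Proof. by rewrite /dotv mulr_sumr; apply: eq_bigr => k _; rewrite mxE mulrA. Qed.
Lemma dotvD u w v : dotv (u + w) v = dotv u v + dotv w v.
Proof. by rewrite /dotv -big_split; apply: eq_bigr => k _; rewrite mxE mulrDl. Qed.
Lemma dotvB u w v : dotv (u - w) v = dotv u v - dotv w v.
Proof. by rewrite /dotv -sumrB; apply: eq_bigr => k _; rewrite !mxE mulrBl. Qed.
Lemma dotvN u v : dotv u (- v) = - dotv u v.
Proof. by rewrite /dotv -sumrN; apply: eq_bigr => k _; rewrite !mxE mulrN. Qed.
Lemma dotv_sum (I : Type) (r : seq I) (P : pred I) (F : I -> 'rV[R]_d) v :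
  dotv (\sum_(j <- r | P j) F j) v = \sum_(j <- r | P j) dotv (F j) v.
Proof.
elim: r => [|a r IH]; first by rewrite !big_nil /dotv big1 // => k _; rewrite mxE mul0r.
rewrite !big_cons; case: ifP => // _; by rewrite dotvD IH.
Qed.

Lemma dotv_cvg {T} (F : set_system T) {FF : Filter F} (f : T -> 'rV[R]_d) l v :
  f @ F --> l -> (fun x => dotv (f x) v) @ F --> dotv l v.
Proof.
move=> fl; rewrite /dotv; apply: cvg_big => [|k Pk]; first exact: add_continuous.
apply: cvgM; last exact: cvg_cst.
apply: (cvg_comp _ (fun M : 'rV[R]_d => M 0 k) fl).
exact: coord_continuous.
Qed.
End dot.

Lemma within_comp_cvg (R : realType) (A B : set R) (f g : R -> R) s :
  A s -> {within B, continuous g} -> {for s, continuous f} ->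
  (forall y, A y -> B (f y)) ->
  (fun y => g (f y)) @ within A (nbhs s) --> g (f s).
Proof.
move=> As cg cf AB.
have gB := (@subspace_continuousP _ B _ g).1 cg (f s) (AB s As).
apply: (cvg_comp f g _ gB) => P /= hP.
have H := cf _ hP.
rewrite nbhs_simpl /within /=.
move: H; rewrite nbhs_simpl /=; apply: filterS => x /= HQ Ax; exact: HQ (AB x Ax).
Qed.

Lemma integrand_cont (R : realType) d taubar (alpha : R -> R)
  (psi : 'rV[R]_d -> 'rV[R]_d -> R) (xi xj : R -> 'rV[R]_d) (s0 a b : R) k c :
  {within `[0, taubar], continuous alpha} ->
  continuous (fun p : 'rV[R]_d * 'rV[R]_d => psi p.1 p.2) ->
  {within `[- taubar, +oo[, continuous xj} ->
  - taubar <= a -> (forall s, a <= s <= b -> 0 <= s0 - s <= taubar) ->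
  {within `[a, b], continuous
     (fun s => ((alpha (s0 - s) * psi (xi s0) (xj s)) *: (xj s - xi s0)) 0 k * c)}.
Proof.
move=> ca cpsi cx ha hab.
have cxab : {within `[a, b], continuous xj}.
  apply: continuous_subspaceW cx => y /=; rewrite !in_itv /= => /andP[ay _].
  by rewrite (le_trans ha ay).
have cxj := (@subspace_continuousP _ `[a, b] _ xj).1 cxab.
apply/(@subspace_continuousP _ `[a, b] _ _).2 => s Hs.
have Hs' : a <= s <= b by move: Hs; rewrite /= in_itv.
rewrite /from_subspace /=. under eq_cvg do rewrite !mxE.
rewrite ?mxE.
apply: cvgM; last exact: cvg_cst.
have h1 : (fun y => alpha (s0 - y)) @ within `[a, b] (nbhs s) --> alpha (s0 - s).
  apply: (@within_comp_cvg _ _ _ (fun y => s0 - y)) => //.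
    by apply: cvgB; [exact: cvg_cst | exact: cvg_id].
have h2 : (fun y => psi (xi s0) (xj y)) @ within `[a, b] (nbhs s) --> psi (xi s0) (xj s).
  apply: (cvg_comp (fun y => (xi s0, xj y)) (fun p => psi p.1 p.2)); last exact: (cpsi (xi s0, xj s)).
  exact: (@cvg_pair _ _ _ _ (nbhs (xi s0)) (nbhs (xj s)) _ _ _ (fun=> xi s0) xj (cvg_cst _) (cxj s Hs)).
have h3 : (fun y => xj y 0 k - xi s0 0 k) @ within `[a, b] (nbhs s) --> xj s 0 k - xi s0 0 k.
  apply: cvgB; last exact: cvg_cst.
  apply: (cvg_comp _ (fun M : 'rV[R]_d => M 0 k) (cxj s Hs)).
  exact: coord_continuous.
by apply: cvgM; first apply: cvgM.
Qed.

Lemma within_cont_sum (R : realType) (A : set R) (I : Type) (r : seq I) (g : I -> R -> R) :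
  (forall k, {within A, continuous (g k)}) ->
  {within A, continuous (fun s => \sum_(k <- r) g k s)}.
Proof.
move=> cg; apply/(@subspace_continuousP _ A _ _).2 => s As.
apply: cvg_big => [|k _]; first exact: add_continuous.
exact: ((@subspace_continuousP _ A _ _).1 (cg k)).
Qed.

Lemma cont_int (R : realType) (a b : R) (g : R -> R) :
  {within `[a, b], continuous g} ->
  lebesgue_measure.-integrable `[a, b] (EFin \o g).
Proof. by move=> cg; apply: continuous_compact_integrable => //; exact: segment_compact. Qed.

Lemma Rint_sum (R : realType) (a b : R) (I : Type) (r : seq I) (g : I -> R -> R) :
  (forall k, {within `[a, b], continuous (g k)}) ->
  Rintegral lebesgue_measure `[a, b] (fun s => \sum_(k <- r) g k s) =
  \sum_(k <- r) Rintegral lebesgue_measure `[a, b] (g k).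
Proof.
move=> cg; elim: r => [|k r IH].
  rewrite big_nil; under eq_Rintegral do rewrite big_nil.
  by rewrite Rintegral_cst ?mul0r //; exact: measurable_itv.
rewrite big_cons; under eq_Rintegral do rewrite big_cons.
rewrite RintegralD ?IH //; first exact: cont_int.
by apply: cont_int; exact: within_cont_sum.
Qed.

Lemma dotvB' (R : realType) d (u w v : 'rV[R]_d) : dotv (u - w) v = dotv u v - dotv w v.
Proof. by rewrite /dotv -sumrB; apply: eq_bigr => k _; rewrite !mxE mulrBl. Qed.
Lemma dotvZ' (R : realType) d c (u v : 'rV[R]_d) : dotv (c *: u) v = c * dotv u v.
Proof. by rewrite /dotv mulr_sumr; apply: eq_bigr => k _; rewrite mxE mulrA. Qed.

Lemma dotv_vint_le0 (R : realType) d taubar (alpha : R -> R)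
  (psi : 'rV[R]_d -> 'rV[R]_d -> R) (xi xj : R -> 'rV[R]_d) (s0 a b : R) v :
  {within `[0, taubar], continuous alpha} ->
  continuous (fun p : 'rV[R]_d * 'rV[R]_d => psi p.1 p.2) ->
  {within `[- taubar, +oo[, continuous xj} ->
  - taubar <= a -> (forall s, a <= s <= b -> 0 <= s0 - s <= taubar) ->
  (forall s, 0 <= s <= taubar -> 0 <= alpha s) ->
  (forall p q, 0 <= psi p q) ->
  (forall s, a <= s <= b -> dotv (xj s) v <= dotv (xi s0) v) ->
  dotv (vintegral a b
     (fun s => (alpha (s0 - s) * psi (xi s0) (xj s)) *: (xj s - xi s0))) v <= 0.
Proof.
move=> ca cpsi cx ha hab apos ppos hy.
set F := fun s => (alpha (s0 - s) * psi (xi s0) (xj s)) *: (xj s - xi s0).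
have cF : forall k c, {within `[a, b], continuous (fun s => F s 0 k * c)}.
  by move=> k c; apply: integrand_cont.
have cF1 : forall k, {within `[a, b], continuous (fun s => F s 0 k)}.
  move=> k; have := cF k 1.
  by rewrite (_ : (fun s => F s 0 k * 1) = (fun s => F s 0 k)) //; apply: funext => s; rewrite mulr1.
have -> : dotv (vintegral a b F) v =
   Rintegral lebesgue_measure `[a, b] (fun s => \sum_(k < d) F s 0 k * v 0 k).
  rewrite Rint_sum // /dotv; apply: eq_bigr => k _.
  rewrite mxE RintegralZr //; try exact: measurable_itv.
  exact: cont_int.
apply: (@le_trans _ _ (Rintegral lebesgue_measure `[a, b] (fun=> (0:R)))); last first.
  by rewrite Rintegral_cst ?mul0r //; exact: measurable_itv.
apply: le_Rintegral; first exact: measurable_itv.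
- by apply: cont_int; apply: (@within_cont_sum _ _ _ _ (fun k s => F s 0 k * v 0 k)) => k; exact: cF.
- apply: cont_int; apply: continuous_subspaceT; exact: cst_continuous.
move=> s /=; rewrite in_itv /= => hs.
have -> : \sum_(k < d) F s 0 k * v 0 k = dotv (F s) v by [].
rewrite /F dotvZ' dotvB'.
apply: mulr_ge0_le0; last by rewrite subr_le0; exact: hy.
apply: mulr_ge0 => //; apply: apos; exact: hab.
Qed.

Lemma rhs_le0 (R : realType) (N d : nat) (taubar : R)
  (tau1 tau2 alpha : R -> R) (psi : 'rV[R]_d -> 'rV[R]_d -> R)
  (x : 'I_N -> R -> 'rV[R]_d) (i : 'I_N) (s0 : R) v :
  (1 <= N)%N -> 0 <= s0 ->
  0 <= tau1 s0 -> tau2 s0 <= taubar ->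
  {within `[0, taubar], continuous alpha} ->
  continuous (fun p : 'rV[R]_d * 'rV[R]_d => psi p.1 p.2) ->
  (forall j, {within `[- taubar, +oo[, continuous (x j)}) ->
  (forall s, 0 <= s <= taubar -> 0 <= alpha s) ->
  (forall p q, 0 <= psi p q) ->
  (forall j s, s0 - tau2 s0 <= s <= s0 - tau1 s0 -> dotv (x j s) v <= dotv (x i s0) v) ->
  dotv (hk_rhs tau1 tau2 alpha psi x i s0) v <= 0.
Proof.
move=> N1 s00 t10 t2b ca cpsi cx apos ppos hy.
rewrite /hk_rhs dotvZ'; apply: mulr_ge0_le0.
  apply: mulr_ge0; rewrite invr_ge0.
    apply: Rintegral_ge0 => s /=; rewrite in_itv /= => /andP[h1 h2].
    by apply: apos; apply/andP; split; [exact: le_trans h1|exact: le_trans t2b].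
  by rewrite subr_ge0 ler1n.
rewrite dotv_sum; apply: sumr_le0 => j _.
apply: dotv_vint_le0 => //.
- by lra.
- by move=> s /andP[h1 h2]; apply/andP; split; lra.
- by move=> s hs; apply: hy.
Qed.

Lemma deriv_left_ge (R : realType) d (f : R -> 'rV[R]_d) s0 v e :
  derivable f s0 1 ->
  (\forall h \near (0:R)^'-, e <= h^-1 * (dotv (f (h + s0)) v - dotv (f s0) v)) ->
  e <= dotv ('D_1 f s0) v.
Proof.
move=> df hq.
have c1 : (fun h : R => h^-1 *: ((f \o shift s0) (h *: 1) - f s0)) @ (0:R)^' --> 'D_1 f s0.
  exact: df.
have c2 : (fun h : R => dotv (h^-1 *: ((f \o shift s0) (h *: 1) - f s0)) v) @ (0:R)^'- --> dotv ('D_1 f s0) v.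
  by apply: cvg_dnbhs_at_left; exact: dotv_cvg.
apply: (cvgr_to_ge c2); move: hq; apply: filterS => h hh.
by rewrite dotvZ' dotvB' /= /shift -[h%:A]/(h * 1) mulr1.
Qed.

Lemma exists_argmax (R : realType) (N : nat) (i : 'I_N) (F : 'I_N -> R) :
  exists i0, forall j, F j <= F i0.
Proof.
case: (@Order.TotalTheory.arg_maxP _ R 'I_N i xpredT F isT) => i0 _ Hm.
by exists i0 => j; exact: Hm.
Qed.

Lemma cont_y (R : realType) d taubar (xj : R -> 'rV[R]_d) v (A : set R) :
  {within `[- taubar, +oo[, continuous xj} -> A `<=` `[- taubar, +oo[ ->
  {within A, continuous (fun s => dotv (xj s) v)}.
Proof.
move=> cx sA; have cA := continuous_subspaceW sA cx.
apply/(@subspace_continuousP _ A _ _).2 => s As.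
apply: dotv_cvg; exact: ((@subspace_continuousP _ A _ _).1 cA s As).
Qed.

Lemma upper_bound (R : realType) (N d : nat) (taubar : R)
  (tau1 tau2 alpha : R -> R) (psi : 'rV[R]_d -> 'rV[R]_d -> R)
  (x : 'I_N -> R -> 'rV[R]_d) :
  (1 <= N)%N -> 0 < taubar ->
  (forall t, 0 <= t -> 0 <= tau1 t /\ tau1 t < tau2 t /\ tau2 t <= taubar) ->
  {within `[0, taubar], continuous alpha} ->
  (forall s, 0 <= s <= taubar -> 0 < alpha s) ->
  continuous (fun p : 'rV[R]_d * 'rV[R]_d => psi p.1 p.2) ->
  (forall a b, 0 < psi a b) ->
  (forall i, {within `[- taubar, +oo[, continuous (x i)}) ->
  (forall i t, 0 < t ->
     derivable (x i) t 1 /\ 'D_1 (x i) t = hk_rhs tau1 tau2 alpha psi x i t) ->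
  forall (v : 'rV[R]_d) (T : R) (i : 'I_N) (t : R),
    0 <= T -> T - taubar <= t ->
    dotv (x i t) v
      <= sup [set r | exists (j : 'I_N) (s : R), s \in `[T - taubar, T] /\ r = dotv (x j s) v].
Proof.
move=> N1 tb0 htau ca apos cpsi ppos cx hder v T i t T0 hat.
set a := T - taubar.
have ha : a = T - taubar by [].
set S := [set r | exists (j : 'I_N) (s : R), s \in `[a, T] /\ r = dotv (x j s) v].
have hsub : forall b, `[a, b] `<=` `[- taubar, +oo[.
  move=> b s /=; rewrite !in_itv /= andbT => /andP[h _]; rewrite /a in h; lra.
have cyab : forall j b, {within `[a, b], continuous (fun s => dotv (x j s) v)}.
  by move=> j b; apply: cont_y; [exact: cx | exact: hsub].
have aT : a <= T by rewrite /a; lra.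
have hS : has_sup S.
  split; first by exists (dotv (x i T) v); exists i, T; split => //; rewrite in_itv /= aT lexx.
  have : forall j, exists c, c \in `[a, T] /\
      forall s, s \in `[a, T] -> dotv (x j s) v <= dotv (x j c) v.
    by move=> j; have [c hc hm] := EVT_max aT (cyab j T); exists c.
  move=> /choice [c hc].
  exists (\sum_j `|dotv (x j (c j)) v|) => r [j [s [hs ->]]].
  apply: le_trans ((hc j).2 s hs) _.
  apply: le_trans (ler_norm _) _.
  rewrite (bigD1 j) //= lerDl; apply: sumr_ge0 => k _; exact: normr_ge0.
have ub : forall j s, s \in `[a, T] -> dotv (x j s) v <= sup S.
  by move=> j s hs; apply: sup_upper_bound => //; exists j, s.
case: (leP t T) => htT.
  by apply: ub; rewrite in_itv /= hat htT.
apply/ler_addgt0Pr => e e0.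
have at_ : a <= t by lra.
set eps := e / (t - a + 1).
have eps0 : 0 < eps by apply: divr_gt0 => //; lra.
have hE : eps * (t - a + 1) = e by rewrite /eps divfK //; apply/eqP => h; lra.
have : forall j, exists c, c \in `[a, t] /\ forall s, s \in `[a, t] ->
    dotv (x j s) v - eps * s <= dotv (x j c) v - eps * c.
  move=> j.
  have cg : {within `[a, t], continuous (fun s => dotv (x j s) v - eps * s)}.
    apply/(@subspace_continuousP _ `[a, t] _ _).2 => s hs.
    apply: cvgB; first exact: ((@subspace_continuousP _ `[a, t] _ _).1 (cyab j t) s hs).
    apply: cvgM; first exact: cvg_cst.
    apply: cvg_within_filter; exact: cvg_id.
  by have [c hc hm] := EVT_max at_ cg; exists c.
move=> /choice [c hc].
have [i0 hi0] := exists_argmax R N i (fun j => dotv (x j (c j)) v - eps * c j).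
set s0 := c i0.
have key : dotv (x i0 s0) v - eps * s0 < sup S + eps - eps * a.
  rewrite ltNge; apply/negP => hm.
  have s0in := (hc i0).1.
  move: (s0in); rewrite in_itv /= => /andP[as0 s0t].
  rewrite -/s0 in as0 s0t.
  case: (leP s0 T) => hs0T.
    have hy := ub i0 s0 (ltac:(by rewrite in_itv /= as0 hs0T)).
    have : eps * a <= eps * s0 by apply: ler_wpM2l => //; exact: ltW.
    lra.
  have s00 : 0 <= s0 by lra.
  have [ht1 [ht12 ht2]] := htau s0 s00.
  have [hd hD] := hder i0 s0 (ltac:(lra)).
  have hy : forall j s, s0 - tau2 s0 <= s <= s0 - tau1 s0 ->
      dotv (x j s) v <= dotv (x i0 s0) v.
    move=> j s /andP[h1 h2].
    have hs : s \in `[a, t].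
      by rewrite in_itv /=; apply/andP; split; lra.
    have h3 := (hc j).2 s hs.
    have h4 := hi0 j.
    rewrite /= -/s0 in h4.
    have : eps * s <= eps * s0 by apply: ler_wpM2l; [exact: ltW | lra].
    lra.
  have Dle : dotv ('D_1 (x i0) s0) v <= 0.
    rewrite hD; apply: (@rhs_le0 R N d taubar) => //.
    - by move=> s hs; apply: ltW; exact: apos.
    - by move=> p q; apply: ltW; exact: ppos.
  have Dge : eps <= dotv ('D_1 (x i0) s0) v.
    apply: deriv_left_ge => //.
    rewrite near_withinE.
    have : a - s0 < 0 by lra.
    move=> /lt_nbhsr; apply: filterS => h hgt hlt.
    have hs : h + s0 \in `[a, t] by rewrite in_itv /=; apply/andP; split; lra.
    have hh := (hc i0).2 _ hs.
    have hu : h^-1 * h = 1 by rewrite mulVf // lt_eqF.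
    have hu0 : h^-1 < 0 by rewrite invr_lt0.
    rewrite -/s0 in hh *.
    nra.
  lra.
have h1 := (hc i).2 t (ltac:(by rewrite in_itv /= at_ lexx)).
have h2 := hi0 i.
rewrite /= in h2.
rewrite -/s0 in h2.
have hE2 : eps * t - eps * a + eps = e by rewrite -hE; ring.
lra.
Qed.
Theorem lemma5p1 (R : realType) (N d : nat) (taubar : R)
  (tau1 tau2 alpha : R -> R) (psi : 'rV[R]_d -> 'rV[R]_d -> R)
  (x : 'I_N -> R -> 'rV[R]_d) :
  (2 <= N)%N -> (1 <= d)%N -> 0 < taubar ->
  {within `[0, +oo[, continuous tau1} ->
  {within `[0, +oo[, continuous tau2} ->
  (forall t, 0 <= t -> 0 <= tau1 t /\ tau1 t < tau2 t /\ tau2 t <= taubar) ->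
  {within `[0, taubar], continuous alpha} ->
  (forall s, 0 <= s <= taubar -> 0 < alpha s) ->
  continuous (fun p : 'rV[R]_d * 'rV[R]_d => psi p.1 p.2) ->
  (exists K : R, forall a b, psi a b <= K) ->
  (forall a b, 0 < psi a b) ->
  (* solution: continuous on [-taubar, oo), differentiable on (0, oo),
     satisfying the system there *)
  (forall i, {within `[- taubar, +oo[, continuous (x i)}) ->
  (forall i t, 0 < t ->
     derivable (x i) t 1 /\ 'D_1 (x i) t = hk_rhs tau1 tau2 alpha psi x i t) ->
  forall (v : 'rV[R]_d) (T : R) (i : 'I_N) (t : R),
    0 <= T -> T - taubar <= t ->
    inf [set r | exists (j : 'I_N) (s : R), s \in `[T - taubar, T] /\ r = dotv (x j s) v]
      <= dotv (x i t) v /\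
    dotv (x i t) v
      <= sup [set r | exists (j : 'I_N) (s : R), s \in `[T - taubar, T] /\ r = dotv (x j s) v].
Proof.
move=> N2 d1 tb0 ct1 ct2 htau ca apos cpsi hK ppos cx hder v T i t T0 hat.
have N1 : (1 <= N)%N by apply: leq_trans N2.
split; last exact: (upper_bound _ _ _ _ _ _ _ _ _ N1 tb0 htau ca apos cpsi ppos cx hder).
rewrite /inf.
have -> : [set - r | r in [set r | exists (j : 'I_N) (s : R),
      s \in `[T - taubar, T] /\ r = dotv (x j s) v]] =
    [set r | exists (j : 'I_N) (s : R), s \in `[T - taubar, T] /\ r = dotv (x j s) (- v)].
  apply/seteqP; split => r /=.
    by move=> [r' [j [s [hs ->]]] <-]; exists j, s; rewrite dotvN.
  move=> [j [s [hs ->]]]; exists (dotv (x j s) v); first by exists j, s.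
  by rewrite dotvN.
rewrite lerNl -dotvN.
exact: (upper_bound _ _ _ _ _ _ _ _ _ N1 tb0 htau ca apos cpsi ppos cx hder).
Qed.
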